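(* For any constant $\beta\ge 0$, there exists an indivisible-goods instance in which no allocation selected by the maximum Nash welfare (MNW) rule satisfies EJR-$\beta$.
   Context: Model: There is a set of agents $N=\{1,\dots,n\}$. The resource $R$ consists of a cake $C=[0,c]$ for a real $c\ge 0$ and a set of indivisible goods $G=\{g_1,\dots,g_m\}$ for an integer $m\ge 0$, with $\max(c,m)>0$. A bundle $R'=(C',G')$ consists of a piece of cake $C'\subseteq C$ (finite union of disjoint closed intervals, with total length $\ell(C')$) and a set $G'\subseteq G$; its size is $s(R')=\ell(C')+|G'|$. Each agent $i$ approves a bundle $R_i=(C_i,G_i)$, and her utility for a bundle $R'$ is $u_i(R')=\ell(C_i\cap C')+|G_i\cap G'|$. A parameter $\alpha\in(0,c+m]$ is given; an allocation is a bundle $A$ with $s(A)\le\alpha$. An indivisible-goods instance is one with $c=0$. For a real $t>0$, a group $N^*\subseteq N$ is $t$-cohesive if $|N^*|\ge t\cdot n/\alpha$ and $s(\bigcap_{i\in N^*}R_i)\ge t$. EJR-$\beta$ (for $\beta\ge 0$): an allocation $A$ satisfies EJR-$\beta$ if for every real $t>0$ and every $t$-cohesive group $N^*$, there is $j\in N^*$ with $u_j(A)>t-\beta$. MNW rule: selects an allocation $A$ maximizing $\prod_{i\in N}u_i(A)$; if the maximum product is $0$, it first maximizes the number of agents with positive utility and then maximizes the product of utilities of that set of agents. *)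

(* Defs.v *)
(* Indivisible-goods instances of the cake+goods model:
   c = 0, so every cake piece has length 0 and bundles reduce to goods sets. *)
From mathcomp Require Import all_boot all_order all_algebra.
From mathcomp Require Import reals.
Set Implicit Arguments. Unset Strict Implicit. Unset Printing Implicit Defensive.
Import Order.TTheory GRing.Theory Num.Theory.
Local Open Scope ring_scope.

Section IndivGoods.
Variables (R : realType) (n m : nat) (alpha : R) (G : 'I_n -> {set 'I_m}).

Definition util (i : 'I_n) (A : {set 'I_m}) : nat := #|G i :&: A|.

Definition feasible (A : {set 'I_m}) : Prop := (#|A|%:R : R) <= alpha.

Definition cohesive (t : R) (S : {set 'I_n}) : Prop :=
  (t * n%:R / alpha <= #|S|%:R) /\ (t <= #|\bigcap_(i in S) G i|%:R).

Definition EJR (beta : R) (A : {set 'I_m}) : Prop :=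
  forall (t : R) (S : {set 'I_n}), 0 < t -> cohesive t S ->
    exists2 j, j \in S & t - beta < (util j A)%:R.

Definition nash (A : {set 'I_m}) : nat := (\prod_(i : 'I_n) util i A)%N.
Definition posagents (A : {set 'I_m}) : {set 'I_n} := [set i | (0 < util i A)%N].
Definition nash_pos (A : {set 'I_m}) : nat := (\prod_(i in posagents A) util i A)%N.

Definition MNW (A : {set 'I_m}) : Prop :=
  feasible A /\
  ((exists2 B, feasible B & (0 < nash B)%N) ->
     forall B, feasible B -> (nash B <= nash A)%N) /\
  (~ (exists2 B, feasible B & (0 < nash B)%N) ->
     forall B, feasible B ->
         (#|posagents B| < #|posagents A|)%N \/
         (#|posagents B| = #|posagents A| /\ (nash_pos B <= nash_pos A)%N)).
End IndivGoods.

(* Main.v *)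
From mathcomp Require Import all_boot all_order all_algebra reals.
Import Order.TTheory GRing.Theory Num.Theory.

Lemma card_pred N (P : pred nat) : #|[set i : 'I_N | P i]| = count P (iota 0 N).
Proof.
rewrite -sum1_count.
have -> : iota 0 N = index_iota 0 N by rewrite /index_iota subn0.
by rewrite big_mkord sum1_card cardsE.
Qed.

Lemma cnt_split t s (P : pred nat) :
  count P (iota 0 (t + s)) = count P (iota 0 t) + count P (iota t s).
Proof. by rewrite iotaD count_cat. Qed.

Lemma cnt_all a b (P : pred nat) : {in iota a b, forall k, P k} -> count P (iota a b) = b.
Proof. by move=> H; rewrite (eq_in_count (a2:=predT)) ?count_predT ?size_iota. Qed.

Lemma cnt_none a b (P : pred nat) : {in iota a b, forall k, ~~ P k} -> count P (iota a b) = 0.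
Proof. by move=> H; rewrite (eq_in_count (a2:=pred0)) ?count_pred0 // => k /H /negbTE. Qed.

Lemma cnt_lt t s : count (fun k => k < t) (iota 0 (t+s)) = t.
Proof.
rewrite cnt_split (@cnt_all 0 t) ?(@cnt_none t s) ?addn0 // => k; rewrite mem_iota.
  by case/andP => /= ? _; rewrite -leqNgt.
by rewrite add0n => /andP[].
Qed.

Lemma cnt_ge t s : count (fun k => t <= k) (iota 0 (t+s)) = s.
Proof.
rewrite cnt_split (@cnt_all t s) ?(@cnt_none 0 t) ?add0n // => k; rewrite mem_iota.
  by rewrite add0n => /andP[_]; rewrite -ltnNge.
by case/andP.
Qed.

Require Import Defs.
From mathcomp Require Import ring lra zify.
Local Open Scope ring_scope.

Theorem mainTheorem4 (R : realType) (beta : R) :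
  0 <= beta ->
  exists (n m : nat) (alpha : R) (G : 'I_n -> {set 'I_m}),
    [/\ (0 < n)%N, (0 < m)%N, 0 < alpha, alpha <= m%:R &
      forall A : {set 'I_m}, MNW alpha G A -> ~ EJR alpha G beta A].
Proof.
move=> hb.
set t := Num.Def.archi_bound beta.
have ht : beta < t%:R := archi_boundP hb.
set T := t.+1.
pose m := (T + T)%N.
pose n := (T + T * T)%N.
pose G := fun i : 'I_n => if (i < T)%N then [set j : 'I_m | val j == val i]
                          else [set j : 'I_m | (T <= j)%N].
exists n, m, (T.+1)%:R, G.
split => //.
- by rewrite ler_nat /m /T addSn ltnS addnS ltnS leq_addr.
move=> A [fA [H1 _]] HE.
pose B := [set j : 'I_m | (j < T.+1)%N].
have cB : #|B| = T.+1.
  rewrite /B (card_pred _ (fun k => k < T.+1)%N) /m.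
  have -> : (T + T = T.+1 + t)%N by rewrite /T addSn addnS.
  exact: cnt_lt.
have fB : @feasible R m (T.+1)%:R B by rewrite /feasible cB.
have nB : (0 < nash G B)%N.
  apply: prodn_gt0 => i; rewrite /util /G; apply/card_gt0P.
  case: ifP => hi.
    have him : (i < m)%N by rewrite /m ltn_addr.
    by exists (Ordinal him); rewrite !inE /= eqxx /= ltnS ltnW.
  have Tm : (T < m)%N by rewrite /m -addn1 leq_add2l.
  by exists (Ordinal Tm); rewrite !inE /= leqnn ltnSn.
have nA : (0 < nash G A)%N.
  exact: leq_trans nB (H1 (ex_intro2 _ _ B fB nB) B fB).
have pos i : (0 < util G i A)%N.
  by move: nA; rewrite /nash (bigD1 i) //= muln_gt0 => /andP[].
pose P := [set j : 'I_m | (j < T)%N].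
pose Ts := [set j : 'I_m | (T <= j)%N].
have cP : #|P| = T by rewrite /P (card_pred _ (fun k => k < T)%N) cnt_lt.
have cTs : #|Ts| = T by rewrite /Ts (card_pred _ (fun k => T <= k)%N) cnt_ge.
have PA : P \subset A.
  apply/subsetP => j; rewrite inE => hj.
  have hjn : (j < n)%N by rewrite /n ltn_addr.
  have := pos (Ordinal hjn); rewrite /util /G /= hj.
  case/card_gt0P => k; rewrite !inE => /andP[/eqP hk kA].
  by have -> : j = k by apply: val_inj.
have cA : (#|A| <= T.+1)%N by rewrite -(ler_nat R).
have cTA : (#|Ts :&: A| <= 1)%N.
  have e := cardsID P A.
  move: (PA); rewrite -(setIidPr PA) => _.
  have sub : Ts :&: A \subset A :\: P.
    apply/subsetP => j; rewrite !inE => /andP[h1 h2]; rewrite h2 andbT -leqNgt //.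
  have := subset_leq_card sub.
  rewrite (setIidPr PA) cP in e.
  move=> h; move: cA; rewrite -e -addn1 leq_add2l => cA; exact: leq_trans h cA.
pose S := [set i : 'I_n | (T <= i)%N].
have cS : #|S| = (T * T)%N by rewrite /S (card_pred _ (fun k => T <= k)%N) cnt_ge.
have GS i : i \in S -> G i = Ts.
  by rewrite inE /G => h; rewrite ltnNge h.
have T0 : (0 : R) < T%:R by rewrite ltr0n.
have coh : @cohesive R n m (T.+1)%:R G T%:R S.
  split.
    rewrite cS /n !natrM natrD natrM -addn1 natrD /=.
    have h0 : (0 : R) < T%:R + 1 by lra.
    have hT1 : (T%:R + 1 : R) != 0 by rewrite (gt_eqF h0).
    rewrite (_ : _ / _ = T%:R * T%:R) //; field; exact: hT1.
  rewrite ler_nat -cTs; apply: subset_leq_card; apply/bigcapsP => i iS.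
  by rewrite GS.
have [j jS hj] := HE T%:R S T0 coh.
move: hj; rewrite /util GS // => hj.
have : ((#|Ts :&: A|)%:R : R) <= 1%:R by rewrite ler_nat.
rewrite /T -addn1 natrD in hj *.
lra.
Qed.
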